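(* (a) Let $M\ge0$, let $u_1,\dots,u_M$ be nonzero complex numbers, and let $u_0,z\in\mathbb{C}$ with $z\notin\{u_0,\dots,u_M\}$. Then \[ \frac{1}{z-u_0}=\sum_{k=0}^M\frac{1}{z-u_k}\prod_{j=k+1}^M\frac{1-u_0/u_j}{1-z/u_j}. \] (b) Let $u_1,u_2,\dots$ be nonzero complex numbers for which there is a constant $c>0$ with $|u_j|\ge c j^2$ for all $j\ge1$, and let $u_0,z\in\mathbb{C}$ with $z\notin\{u_0,u_1,u_2,\dots\}$. Then \[ \frac{1}{z-u_0}=\sum_{k=0}^\infty\frac{1}{z-u_k}\prod_{j=k+1}^\infty\frac{1-u_0/u_j}{1-z/u_j}, \] where the infinite products and the series converge. *)

(* Defs.v *)
From Stdlib Require Import Reals.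
Open Scope R_scope.

Definition Cx : Type := (R * R)%type.
Definition C0 : Cx := (0, 0).
Definition C1 : Cx := (1, 0).
Definition Cadd (x y : Cx) : Cx := (fst x + fst y, snd x + snd y).
Definition Copp (x : Cx) : Cx := (- fst x, - snd x).
Definition Csub (x y : Cx) : Cx := Cadd x (Copp y).
Definition Cmul (x y : Cx) : Cx :=
  (fst x * fst y - snd x * snd y, fst x * snd y + snd x * fst y).
Definition Cinv (x : Cx) : Cx :=
  (fst x / (fst x ^ 2 + snd x ^ 2), - snd x / (fst x ^ 2 + snd x ^ 2)).
Definition Cdiv (x y : Cx) : Cx := Cmul x (Cinv y).
Definition Cmod (x : Cx) : R := sqrt (fst x ^ 2 + snd x ^ 2).

Fixpoint Csum (f : nat -> Cx) (n : nat) : Cx :=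
  match n with
  | O => f O
  | S m => Cadd (Csum f m) (f (S m))
  end.

Fixpoint Cprod_len (f : nat -> Cx) (a len : nat) : Cx :=
  match len with
  | O => C1
  | S l => Cmul (Cprod_len f a l) (f (a + l)%nat)
  end.

(* prod_{j=a}^{b} f j, equal to 1 when b < a *)
Definition Cprod (f : nat -> Cx) (a b : nat) : Cx := Cprod_len f a (S b - a).

Definition Ccv (s : nat -> Cx) (l : Cx) : Prop :=
  forall eps : R, eps > 0 -> exists N : nat, forall n : nat, (n >= N)%nat ->
    Cmod (Csub (s n) l) < eps.

Definition factor (u : nat -> Cx) (z : Cx) (j : nat) : Cx :=
  Cdiv (Csub C1 (Cdiv (u O) (u j))) (Csub C1 (Cdiv z (u j))).

(* Main.v *)
From Stdlib Require Import Reals Lra Lia.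
From Coquelicot Require Import Coquelicot.
Require Import Defs.
From Stdlib Require Import ClassicalEpsilon ZArith.
Open Scope R_scope.

Lemma eC_add : Cadd = Cplus. Proof. reflexivity. Qed.
Lemma eC_mul : Cmul = Cmult. Proof. reflexivity. Qed.
Lemma eC_sub : Csub = Cminus. Proof. reflexivity. Qed.
Lemma eC_opp : Defs.Copp = Complex.Copp. Proof. reflexivity. Qed.
Lemma eC_inv : Defs.Cinv = Complex.Cinv. Proof. reflexivity. Qed.
Lemma eC_div : Defs.Cdiv = Complex.Cdiv. Proof. reflexivity. Qed.
Lemma eC_mod : Defs.Cmod = Complex.Cmod. Proof. reflexivity. Qed.
Lemma eC1 : C1 = RtoC 1. Proof. reflexivity. Qed.
Lemma eC0 : C0 = RtoC 0. Proof. reflexivity. Qed.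

Fixpoint Cpl (f : nat -> C) (a L : nat) : C :=
  match L with O => RtoC 1 | S l => Cmult (Cpl f a l) (f (a + l)%nat) end.
Fixpoint Cs (f : nat -> C) (n : nat) : C :=
  match n with O => f O | S m => Cplus (Cs f m) (f (S m)) end.
Lemma eCpl f a L : Cprod_len f a L = Cpl f a L.
Proof. induction L; simpl; [reflexivity|]. rewrite IHL; reflexivity. Qed.
Lemma eCs f n : Csum f n = Cs f n.
Proof. induction n; simpl; [reflexivity|]. rewrite IHn; reflexivity. Qed.

Ltac toC := rewrite ?eCpl, ?eCs in *; rewrite ?eC_add, ?eC_mul, ?eC_sub, ?eC_opp, ?eC_inv, ?eC_div, ?eC_mod, ?eC1, ?eC0 in *;
  try match goal with |- @eq _ ?a ?b => change (@eq C a b) end.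

Lemma Cminus_neq0 (a b : C) : a <> b -> (a - b)%C <> RtoC 0.
Proof. intros H E; apply H. replace a with ((a - b) + b)%C by ring. rewrite E; ring. Qed.

Lemma Csum_ext (f g : nat -> C) n :
  (forall k, (k <= n)%nat -> f k = g k) -> Csum f n = Csum g n.
Proof.
  induction n; intros H; simpl. apply H; lia.
  rewrite IHn by (intros; apply H; lia). rewrite H by lia. reflexivity.
Qed.

Lemma Csum_mulr (f : nat -> C) c n :
  Csum (fun k => f k * c)%C n = (Csum f n * c)%C.
Proof. induction n; simpl. reflexivity. rewrite IHn. toC. ring. Qed.

Lemma Cprod_snoc f k M : (k <= M)%nat ->
  Cprod f (S k) (S M) = (Cprod f (S k) M * f (S M))%C.
Proof.
  intros H. unfold Cprod. replace (S (S M) - S k)%nat with (S (S M - S k)) by lia.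
  cbn [Cprod_len]. toC. f_equal. f_equal. lia.
Qed.

Lemma Cprod_empty f M : Cprod f (S (S M)) (S M) = RtoC 1.
Proof. unfold Cprod. rewrite Nat.sub_diag. reflexivity. Qed.

Lemma alg1 (a v z : C) : v <> RtoC 0 -> (z - a)%C <> RtoC 0 -> (z - v)%C <> RtoC 0 ->
  (/ (z - a) * ((1 - a / v) / (1 - z / v)) + / (z - v) * 1 = / (z - a))%C.
Proof.
  intros Hv Ha Hz.
  assert (E : (1 - z / v = (v - z) / v)%C) by (field; auto).
  assert (Hvz : (v - z)%C <> RtoC 0).
  { intro E'; apply Hz. replace (z - v)%C with (- (v - z))%C by ring. rewrite E'. ring. }
  rewrite E. field. repeat split; auto.
Qed.

Lemma part_a : forall M (u : nat -> C) (z : C),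
  (forall j, (1 <= j <= M)%nat -> u j <> RtoC 0) ->
  (forall k, (k <= M)%nat -> z <> u k) ->
  (/ (z - u O))%C =
  Csum (fun k => / (z - u k) * Cprod (factor u z) (S k) M)%C M.
Proof.
  induction M; intros u z Hu Hz.
  - simpl. unfold Cprod. simpl. toC. ring.
  - cbn [Csum]. toC.
    rewrite (Csum_ext _ (fun k => (/ (z - u k) * Cprod (factor u z) (S k) M) * factor u z (S M))%C).
    2:{ intros k Hk. rewrite Cprod_snoc by lia. toC. ring. }
    rewrite Csum_mulr. rewrite <- IHM.
    2:{ intros; apply Hu; lia. }
    2:{ intros; apply Hz; lia. }
    rewrite Cprod_empty. unfold factor. toC.
    symmetry. apply alg1.
    + apply Hu; lia.
    + apply Cminus_neq0, Hz; lia.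
    + apply Cminus_neq0, Hz; lia.
Qed.


Lemma Cmod_le_sum (w : C) : Complex.Cmod w <= Rabs (fst w) + Rabs (snd w).
Proof.
  unfold Complex.Cmod. rewrite <- (sqrt_pow2 (Rabs (fst w) + Rabs (snd w))).
  2:{ pose proof (Rabs_pos (fst w)); pose proof (Rabs_pos (snd w)); lra. }
  apply sqrt_le_1_alt. rewrite <- (pow2_abs (fst w)), <- (pow2_abs (snd w)).
  pose proof (Rabs_pos (fst w)); pose proof (Rabs_pos (snd w)). nra.
Qed.

Lemma Cmod_sym (a b : C) : Complex.Cmod (a - b) = Complex.Cmod (b - a).
Proof. replace (a - b)%C with (- (b - a))%C by ring. apply Cmod_opp. Qed.

Lemma C_complete (s : nat -> C) :
  (forall eps, eps > 0 -> exists N, forall n m, (n >= N)%nat -> (m >= N)%nat ->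
     Complex.Cmod (s n - s m)%C < eps) -> exists l, Ccv s l.
Proof.
  intros H.
  assert (H1 : Cauchy_crit (fun n => fst (s n))).
  { intros eps He. destruct (H eps He) as [N HN]. exists N. intros n m Hn Hm.
    unfold Rdist. eapply Rle_lt_trans. 2: apply (HN n m Hn Hm).
    apply (re_le_Cmod (s n - s m)%C). }
  assert (H2 : Cauchy_crit (fun n => snd (s n))).
  { intros eps He. destruct (H eps He) as [N HN]. exists N. intros n m Hn Hm.
    unfold Rdist. eapply Rle_lt_trans. 2: apply (HN n m Hn Hm).
    eapply Rle_trans. 2: apply (Rmax_Cmod (s n - s m)%C). apply Rmax_r. }
  destruct (Rcomplete.R_complete _ H1) as [l1 Hl1]. destruct (Rcomplete.R_complete _ H2) as [l2 Hl2].
  exists (l1, l2). intros eps He.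
  destruct (Hl1 (eps/2)) as [N1 HN1]; [lra|]. destruct (Hl2 (eps/2)) as [N2 HN2]; [lra|].
  exists (max N1 N2). intros n Hn.
  specialize (HN1 n ltac:(lia)). specialize (HN2 n ltac:(lia)). unfold Rdist in *.
  eapply Rle_lt_trans. apply (Cmod_le_sum (s n - (l1, l2))%C). simpl.
  replace (fst (s n) + - l1) with (fst (s n) - l1) by ring.
  replace (snd (s n) + - l2) with (snd (s n) - l2) by ring. lra.
Qed.

Lemma Ccv_close (s : nat -> C) (l1 l2 : C) : Ccv s l1 -> Ccv s l2 -> forall eps, eps > 0 ->
  Complex.Cmod (l1 - l2)%C < eps.
Proof.
  intros H1 H2 eps He.
  destruct (H1 (eps/2)) as [N1 HN1]; [lra|]. destruct (H2 (eps/2)) as [N2 HN2]; [lra|].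
  specialize (HN1 (max N1 N2) ltac:(lia)). specialize (HN2 (max N1 N2) ltac:(lia)).
  change (Complex.Cmod (s (max N1 N2) - l1)%C < eps/2) in HN1.
  change (Complex.Cmod (s (max N1 N2) - l2)%C < eps/2) in HN2.
  replace (l1 - l2)%C with ((s (max N1 N2) - l2) - (s (max N1 N2) - l1))%C by ring.
  eapply Rle_lt_trans. apply Cmod_triangle. rewrite Cmod_opp. lra.
Qed.

Lemma Ccv_unique (s : nat -> C) (l1 l2 : C) : Ccv s l1 -> Ccv s l2 -> l1 = l2.
Proof.
  intros H1 H2. destruct (Req_dec (Complex.Cmod (l1 - l2)%C) 0) as [E|E].
  - apply Cmod_eq_0 in E. replace l1 with ((l1 - l2) + l2)%C by ring. rewrite E. ring.
  - pose proof (Cmod_ge_0 (l1 - l2)%C).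
    pose proof (Ccv_close s l1 l2 H1 H2 (Complex.Cmod (l1 - l2)%C) ltac:(lra)). lra.
Qed.

Lemma Ccv_scal (s : nat -> C) (l c : C) : Ccv s l -> Ccv (fun n => c * s n)%C (c * l)%C.
Proof.
  intros H eps He. pose proof (Cmod_ge_0 c).
  destruct (H (eps / (Complex.Cmod c + 1))) as [N HN].
  { apply Rdiv_lt_0_compat; lra. }
  exists N. intros n Hn. specialize (HN n Hn).
  change (Complex.Cmod (s n - l)%C < eps / (Complex.Cmod c + 1)) in HN.
  change (Complex.Cmod (c * s n - c * l)%C < eps).
  replace (c * s n - c * l)%C with (c * (s n - l))%C by ring. rewrite Cmod_mult.
  pose proof (Cmod_ge_0 (s n - l)%C).
  apply Rle_lt_trans with ((Complex.Cmod c + 1) * Complex.Cmod (s n - l)%C). nra.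
  apply Rmult_lt_compat_l with (r := Complex.Cmod c + 1) in HN; [|lra].
  replace ((Complex.Cmod c + 1) * (eps / (Complex.Cmod c + 1))) with eps in HN by (field; lra).
  lra.
Qed.

Lemma Ccv_shift (s : nat -> C) (l : C) d : Ccv s l -> Ccv (fun n => s (n + d)%nat) l.
Proof. intros H eps He. destruct (H eps He) as [N HN]. exists N. intros n Hn. apply HN. lia. Qed.

Lemma Ccv_le (s : nat -> C) (l c : C) r : Ccv s l -> (forall n, Complex.Cmod (s n - c)%C <= r) ->
  Complex.Cmod (l - c)%C <= r.
Proof.
  intros H Hb. destruct (Rle_lt_dec (Complex.Cmod (l - c)%C) r) as [|Hlt]; auto.
  destruct (H (Complex.Cmod (l - c)%C - r)) as [N HN]; [lra|].
  specialize (HN N (le_n _)). change (Complex.Cmod (s N - l)%C < Complex.Cmod (l - c)%C - r) in HN.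
  specialize (Hb N).
  assert (Complex.Cmod (l - c)%C <= Complex.Cmod (s N - l)%C + Complex.Cmod (s N - c)%C).
  { replace (l - c)%C with (- (s N - l) + (s N - c))%C by ring.
    eapply Rle_trans. apply Cmod_triangle. rewrite Cmod_opp. lra. }
  lra.
Qed.


Fixpoint ps (b : nat -> R) (n : nat) : R :=
  match n with O => 0 | S m => ps b m + b m end.

Lemma ps_mono b : (forall j, 0 <= b j) -> forall n m, (n <= m)%nat -> ps b n <= ps b m.
Proof.
  intros Hb n m H. induction H. lra. simpl. specialize (Hb m). lra.
Qed.

Lemma prod_split (f : nat -> C) a L1 L2 :
  Cpl f a (L1 + L2) = (Cpl f a L1 * Cpl f (a + L1) L2)%C.
Proof.
  induction L2.
  - rewrite Nat.add_0_r. simpl. toC. ring.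
  - rewrite Nat.add_succ_r. cbn [Cpl]. rewrite IHL2. toC.
    replace (a + (L1 + L2))%nat with (a + L1 + L2)%nat by lia. ring.
Qed.

Definition bf (f : nat -> C) (j : nat) : R := Complex.Cmod (f j - 1)%C.

Lemma exp_mono x y : x <= y -> exp x <= exp y.
Proof. intros H. destruct (Rle_lt_or_eq_dec _ _ H). left; apply exp_increasing; auto. subst; lra. Qed.

Lemma Cmod_f_le (w : C) : Complex.Cmod w <= 1 + Complex.Cmod (w - 1)%C.
Proof.
  replace w with (1 + (w - 1))%C at 1 by ring. eapply Rle_trans. apply Cmod_triangle.
  rewrite Cmod_1. lra.
Qed.

Lemma prod_bound (f : nat -> C) a L :
  Complex.Cmod (Cpl f a L) <= exp (ps (bf f) (a + L) - ps (bf f) a).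
Proof.
  induction L.
  - rewrite Nat.add_0_r. replace (ps (bf f) a - ps (bf f) a) with 0 by ring. rewrite exp_0.
    simpl. toC. rewrite Cmod_1. lra.
  - cbn [Cpl]. toC. rewrite Cmod_mult. rewrite Nat.add_succ_r. cbn [ps].
    replace (ps (bf f) (a + L) + bf f (a + L) - ps (bf f) a)
      with ((ps (bf f) (a + L) - ps (bf f) a) + bf f (a + L)) by ring.
    rewrite exp_plus. pose proof (Cmod_ge_0 (Cpl f a L)).
    pose proof (Cmod_ge_0 (f (a+L)%nat)).
    apply Rmult_le_compat; auto.
    eapply Rle_trans. apply Cmod_f_le. apply exp_ineq1_le.
Qed.

Lemma prod_diff (f : nat -> C) a E L d :
  (forall L, Complex.Cmod (Cpl f a L) <= E) ->
  Complex.Cmod (Cpl f a (L + d) - Cpl f a L)%C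
    <= E * (ps (bf f) (a + (L + d)) - ps (bf f) (a + L)).
Proof.
  intros HE. induction d.
  - rewrite Nat.add_0_r. replace (Cpl f a L - Cpl f a L)%C with (RtoC 0) by ring.
    rewrite Cmod_0. lra.
  - rewrite Nat.add_succ_r. cbn [Cpl ps]. toC.
    replace (Cpl f a (L + d) * f (a + (L + d))%nat - Cpl f a L)%C
      with ((Cpl f a (L + d) - Cpl f a L) + Cpl f a (L + d) * (f (a + (L + d))%nat - 1))%C by ring.
    eapply Rle_trans. apply Cmod_triangle. rewrite Cmod_mult.
    rewrite Nat.add_succ_r. cbn [ps].
    pose proof (Cmod_ge_0 (f (a + (L + d))%nat - 1)%C). specialize (HE (L + d)%nat).
    change (bf f (a + (L + d))%nat) with (Complex.Cmod (f (a + (L + d))%nat - 1)%C).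
    assert (Complex.Cmod (Cpl f a (L + d)) * Complex.Cmod (f (a + (L + d))%nat - 1)%C
            <= E * Complex.Cmod (f (a + (L + d))%nat - 1)%C) by (apply Rmult_le_compat_r; auto).
    nra.
Qed.

Lemma prod_conv (f : nat -> C) (S : R) :
  (forall n, ps (bf f) n <= S) -> Un_cv (ps (bf f)) S ->
  forall a, exists l, Ccv (fun L => Cpl f a L) l /\
     Complex.Cmod (l - 1)%C <= exp S * (S - ps (bf f) a).
Proof.
  intros HS Hcv a.
  assert (Hb : forall j, 0 <= bf f j) by (intros; apply Cmod_ge_0).
  assert (Hps0 : forall n, 0 <= ps (bf f) n) by (intros; apply (ps_mono _ Hb 0 n); lia).
  assert (HE : forall L, Complex.Cmod (Cpl f a L) <= exp S).
  { intros L. eapply Rle_trans. apply prod_bound. apply exp_mono.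
    specialize (HS (a + L)%nat). specialize (Hps0 a). lra. }
  pose proof (exp_pos S) as HEp.
  destruct (C_complete (fun L => Cpl f a L)) as [l Hl].
  { intros eps He. destruct (Hcv (eps / exp S)) as [N HN].
    { apply Rdiv_lt_0_compat; lra. }
    exists N. intros n m Hn Hm.
    assert (key : forall n m, (n <= m)%nat -> (n >= N)%nat ->
              Complex.Cmod (Cpl f a m - Cpl f a n)%C < eps).
    { clear n m Hn Hm. intros n m Hnm Hn.
      replace m with (n + (m - n))%nat by lia.
      eapply Rle_lt_trans. apply prod_diff; auto.
      specialize (HN (a + n)%nat ltac:(lia)). unfold Rdist in HN.
      pose proof (HS (a + (n + (m - n)))%nat).
      rewrite Rabs_left1 in HN.
      2:{ specialize (HS (a + n)%nat). lra. }
      apply Rmult_lt_compat_l with (r := exp S) in HN; auto.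
      replace (exp S * (eps / exp S)) with eps in HN by (field; lra).
      assert (exp S * (ps (bf f) (a + (n + (m - n))) - ps (bf f) (a + n)) <= exp S * - (ps (bf f) (a + n) - S)).
      { apply Rmult_le_compat_l; lra. }
      lra. }
    destruct (Compare_dec.le_lt_dec n m).
    - rewrite Cmod_sym. apply key; lia.
    - apply key; lia. }
  exists l. split; auto.
  apply (Ccv_le _ _ _ _ Hl). intros L.
  replace (Cpl f a L - 1)%C with (Cpl f a (0 + L) - Cpl f a 0)%C by reflexivity.
  eapply Rle_trans. apply prod_diff; auto.
  apply Rmult_le_compat_l. lra. replace (a + (0 + L))%nat with (a + L)%nat by lia. rewrite Nat.add_0_r. specialize (HS (a + L)%nat). lra.
Qed.


Lemma nat_above x : exists n : nat, x < INR n.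
Proof.
  destruct (Rlt_le_dec x 0) as [H|H]. exists 0%nat. simpl. lra.
  destruct (archimed x) as [H1 H2].
  assert (Hp : (0 <= up x)%Z). { apply le_IZR. lra. }
  exists (Z.to_nat (up x)). rewrite INR_IZR_INZ, Z2Nat.id; auto.
Qed.

Lemma Ccv_ext (s t : nat -> C) (l : C) : (forall n, s n = t n) -> Ccv s l -> Ccv t l.
Proof. intros E H eps He. destruct (H eps He) as [N HN]. exists N. intros n Hn. rewrite <- E. apply HN; auto. Qed.

Lemma fact_eq (u : nat -> C) (z : C) j : u j <> RtoC 0 -> z <> u j ->
  (factor u z j - 1 = (z - u O) / (u j - z))%C.
Proof.
  intros Hu Hz. unfold factor. toC.
  assert (Hvz : (u j - z)%C <> RtoC 0).
  { intro E'; apply Hz. replace z with (u j - (u j - z))%C by ring. rewrite E'. ring. }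
  assert (E : (1 - z / u j = (u j - z) / u j)%C) by (field; auto).
  rewrite E. field. auto.
Qed.

Lemma real_step K x : 0 <= K -> 1 <= x -> K / (x + 1) ^ 2 <= K / x - K / (x + 1).
Proof.
  intros HK Hx. replace (K / x - K / (x + 1)) with (K / (x * (x + 1))) by (field; lra).
  unfold Rdiv. apply Rmult_le_compat_l; auto. apply Rinv_le_contravar. nra. nra.
Qed.

Lemma b_bound (u : nat -> C) (z : C) (c : R) j :
  (forall j, (1 <= j)%nat -> u j <> RtoC 0) -> c > 0 ->
  (forall j, (1 <= j)%nat -> Complex.Cmod (u j) >= c * INR j ^ 2) ->
  (forall k, z <> u k) -> (1 <= j)%nat -> c * INR j >= 2 * Complex.Cmod z ->
  bf (fun j => factor u z j) j <= (2 * Complex.Cmod (z - u O)%C / c) / INR j ^ 2.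
Proof.
  intros Hu Hc Hcb Hz Hj Hcj. unfold bf. rewrite fact_eq; auto.
  assert (Hvz : (u j - z)%C <> RtoC 0).
  { intro E'; apply (Hz j). replace z with (u j - (u j - z))%C by ring. rewrite E'. ring. }
  rewrite Cmod_div; auto.
  assert (HJ : 1 <= INR j) by (apply (le_INR 1); auto).
  assert (Ht : Complex.Cmod (u j) <= Complex.Cmod (u j - z)%C + Complex.Cmod z).
  { replace (u j) with ((u j - z) + z)%C at 1 by ring. apply Cmod_triangle. }
  specialize (Hcb j Hj).
  assert (INR j <= INR j ^ 2) by (simpl; nra).
  assert (c * INR j <= c * INR j ^ 2) by (apply Rmult_le_compat_l; lra).
  assert (HD : c * INR j ^ 2 / 2 <= Complex.Cmod (u j - z)%C) by lra.
  pose proof (Cmod_ge_0 (z - u O)%C).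
  assert (Hpos : 0 < c * INR j ^ 2 / 2) by (apply Rdiv_lt_0_compat; [apply Rmult_lt_0_compat; [lra| apply pow_lt; lra] | lra]).
  replace (2 * Complex.Cmod (z - u O)%C / c / INR j ^ 2) with
    (Complex.Cmod (z - u O)%C / (c * INR j ^ 2 / 2)) by (field; split; lra).
  unfold Rdiv. apply Rmult_le_compat_l; auto. apply Rinv_le_contravar; auto.
Qed.


Lemma ps_ub (b : nat -> R) (K : R) (J0 : nat) :
  (forall j, 0 <= b j) -> 0 <= K -> (1 <= J0)%nat ->
  (forall j, (J0 <= j)%nat -> b j <= K / INR j ^ 2) ->
  has_ub (ps b).
Proof.
  intros Hb HK HJ Hbj.
  assert (HJ0 : 1 <= INR J0) by (apply (le_INR 1); auto).
  assert (Hind : forall d, ps b (S (J0 + d)) <= ps b (S J0) + K / INR J0 - K / INR (J0 + d)).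
  { induction d.
    - rewrite Nat.add_0_r. lra.
    - replace (S (J0 + S d)) with (S (S (J0 + d))) by lia. cbn [ps].
      cbn [ps] in IHd.
      replace (J0 + S d)%nat with (S (J0 + d)) by lia.
      pose proof (Hbj (S (J0 + d)) ltac:(lia)).
      rewrite S_INR in *.
      assert (1 <= INR (J0 + d)) by (apply (le_INR 1); lia).
      pose proof (real_step K (INR (J0 + d)) HK H0). lra. }
  exists (ps b (S J0) + K / INR J0). intros x [n ->].
  assert (0 <= K / INR J0) by (apply Rle_mult_inv_pos; lra).
  destruct (Compare_dec.le_lt_dec n (S J0)).
  - pose proof (ps_mono b Hb n (S J0) l). lra.
  - destruct n as [|m]; [lia|].
    specialize (Hind (m - J0)%nat). replace (J0 + (m - J0))%nat with m in Hind by lia.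
    assert (1 <= INR m) by (apply (le_INR 1); lia).
    assert (0 <= K / INR m) by (apply Rle_mult_inv_pos; lra). lra.
Qed.

Lemma part_b : forall (u : nat -> C) (z : C),
  (forall j : nat, (1 <= j)%nat -> u j <> RtoC 0) ->
  (exists c : R, c > 0 /\
     forall j : nat, (1 <= j)%nat -> Complex.Cmod (u j) >= c * (INR j) ^ 2) ->
  (forall k : nat, z <> u k) ->
  exists P : nat -> C,
    (forall k : nat, Ccv (fun N => Cprod (factor u z) (S k) N) (P k)) /\
    Ccv (fun n => Csum (fun k => Cmul (Defs.Cinv (Csub z (u k))) (P k)) n)
        (Defs.Cinv (Csub z (u O))).
Proof.
  intros u z Hu [c [Hc Hcb]] Hz.
  pose (f := (fun j => factor u z j) : nat -> C).
  destruct (nat_above (2 * Complex.Cmod z / c)) as [J1 HJ1].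
  pose (J0 := S J1).
  assert (HJ0 : forall j, (J0 <= j)%nat -> (1 <= j)%nat /\ c * INR j >= 2 * Complex.Cmod z).
  { intros j Hj. split. unfold J0 in Hj; lia.
    assert (INR J1 <= INR j) by (apply le_INR; unfold J0 in Hj; lia).
    assert (2 * Complex.Cmod z < c * INR j).
    { apply Rmult_lt_compat_l with (r := c) in HJ1; auto.
      replace (c * (2 * Complex.Cmod z / c)) with (2 * Complex.Cmod z) in HJ1 by (field; lra).
      nra. }
    lra. }
  set (K := 2 * Complex.Cmod (z - u O)%C / c).
  assert (HK : 0 <= K).
  { unfold K. pose proof (Cmod_ge_0 (z - u O)%C). apply Rle_mult_inv_pos; lra. }
  assert (Hb : forall j, 0 <= bf f j) by (intros; apply Cmod_ge_0).
  assert (Hub : has_ub (ps (bf f))).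
  { apply (ps_ub _ K J0 Hb HK). unfold J0; lia.
    intros j Hj. destruct (HJ0 j Hj). apply (b_bound u z c j); auto. }
  assert (Hgr : Un_growing (ps (bf f))).
  { intros n. simpl. specialize (Hb n). lra. }
  destruct (growing_cv _ Hgr Hub) as [Slim HS].
  pose proof (growing_ineq _ _ Hgr HS) as HSle.
  pose proof (prod_conv f Slim HSle HS) as Hex.
  pose (Pl := (fun a => proj1_sig (constructive_indefinite_description _ (Hex a))) : nat -> C).
  assert (HPl : forall a, Ccv (fun L => Cpl f a L) (Pl a) /\
              Complex.Cmod (Pl a - 1)%C <= exp Slim * (Slim - ps (bf f) a)).
  { intros a. exact (proj2_sig (constructive_indefinite_description _ (Hex a))). }
  assert (Hsplit : forall k n, (k <= n)%nat -> Pl (S k) = (Cpl f (S k) (n - k) * Pl (S n))%C).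
  { intros k n Hkn. apply (Ccv_unique (fun L => Cpl f (S k) (L + (n - k)))).
    - apply Ccv_shift. apply HPl.
    - apply (Ccv_ext (fun L => Cpl f (S k) (n - k) * Cpl f (S n) L)%C).
      + intros L. rewrite Nat.add_comm, prod_split.
        replace (S k + (n - k))%nat with (S n) by lia. reflexivity.
      + apply Ccv_scal. apply HPl. }
  exists (fun k => Pl (S k)). split.
  - intros k eps He. destruct (proj1 (HPl (S k)) eps He) as [N HN].
    exists (N + k)%nat. intros n Hn.
    change (Defs.Cmod (Csub (Cprod_len (factor u z) (S k) (n - k)) (Pl (S k))) < eps).
    rewrite eCpl. apply HN. lia.
  - assert (Hsum : forall n,
      Csum (fun k => Cmul (Defs.Cinv (Csub z (u k))) (Pl (S k))) n =
      (/ (z - u O) * Pl (S n))%C).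
    { intros n.
      rewrite (Csum_ext _ (fun k => (/ (z - u k) * Cprod (factor u z) (S k) n) * Pl (S n))%C).
      - rewrite Csum_mulr. rewrite <- part_a. reflexivity.
        + intros; apply Hu; lia.
        + intros; apply Hz.
      - intros k Hk. rewrite (Hsplit k n Hk).
        change (Cprod (factor u z) (S k) n) with (Cprod_len (factor u z) (S k) (n - k)).
        rewrite (eCpl (factor u z) (S k) (n - k)). change (Cpl (factor u z)) with (Cpl f). toC. ring. }
    intros eps He.
    set (w := (/ (z - u O))%C).
    pose proof (Cmod_ge_0 w). pose proof (exp_pos Slim).
    assert (Hq : 0 < Complex.Cmod w * exp Slim + 1) by nra.
    destruct (HS (eps / (Complex.Cmod w * exp Slim + 1))) as [N HN].
    { apply Rdiv_lt_0_compat; lra. }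
    exists N. intros n Hn.
    change (Complex.Cmod (Csum (fun k => Cmul (Defs.Cinv (Csub z (u k))) (Pl (S k))) n - w)%C < eps).
    rewrite Hsum. fold w.
    replace (w * Pl (S n) - w)%C with (w * (Pl (S n) - 1))%C by ring.
    rewrite Cmod_mult.
    specialize (HN (S n) ltac:(lia)). unfold Rdist in HN.
    pose proof (HSle (S n)).
    rewrite Rabs_left1 in HN by lra.
    destruct (HPl (S n)) as [_ Hb1].
    assert (Hx : 0 <= Slim - ps (bf f) (S n)) by lra.
    apply Rmult_lt_compat_l with (r := Complex.Cmod w * exp Slim + 1) in HN; auto.
    replace ((Complex.Cmod w * exp Slim + 1) * (eps / (Complex.Cmod w * exp Slim + 1))) with eps in HN
      by (field; lra).
    apply Rle_lt_trans with (Complex.Cmod w * (exp Slim * (Slim - ps (bf f) (S n)))).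
    + apply Rmult_le_compat_l; auto.
    + assert (0 <= exp Slim * (Slim - ps (bf f) (S n))) by nra. nra.
Qed.


Theorem lemma5p1 :
  (* (a) finite version *)
  (forall (M : nat) (u : nat -> Cx) (z : Cx),
     (forall j : nat, (1 <= j <= M)%nat -> u j <> C0) ->
     (forall k : nat, (k <= M)%nat -> z <> u k) ->
     Cinv (Csub z (u O)) =
     Csum (fun k => Cmul (Cinv (Csub z (u k))) (Cprod (factor u z) (S k) M)) M)
  /\
  (* (b) infinite version *)
  (forall (u : nat -> Cx) (z : Cx),
     (forall j : nat, (1 <= j)%nat -> u j <> C0) ->
     (exists c : R, c > 0 /\
        forall j : nat, (1 <= j)%nat -> Cmod (u j) >= c * (INR j) ^ 2) ->
     (forall k : nat, z <> u k) ->
     exists P : nat -> Cx,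
       (forall k : nat, Ccv (fun N => Cprod (factor u z) (S k) N) (P k)) /\
       Ccv (fun n => Csum (fun k => Cmul (Cinv (Csub z (u k))) (P k)) n)
           (Cinv (Csub z (u O)))).
Proof.
  split.
  - intros M u z Hu Hz. exact (part_a M u z Hu Hz).
  - intros u z Hu Hc Hz. exact (part_b u z Hu Hc Hz).
Qed.
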